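(* There is a function $\varepsilon(r)\to0$ as $r\to\infty$ such that for every positive integer $r$ and every family $F$ of functions from a set $X$ to $\{0,1\}$, \[\mathrm{opt}_{\mathrm{amb},r}(F)\le \mathrm{opt}_{\mathrm{std}}(F)\,2^r\ln r\,(1+\varepsilon(r)).\]
   Context: Let $F$ be a family of functions from $X$ to $Y$. In online learning an adversary secretly fixes $f\in F$ and presents inputs; the learner guesses values of $f$. In the standard model each input is presented singly and after the guess the true value is revealed; $\mathrm{opt}_{\mathrm{std}}(F)$ is the maximum number of incorrect guesses under optimal play by both sides. In the $r$-delayed ambiguous reinforcement model, each round $i$ consists of $r$ inputs $x_{i,1},\dots,x_{i,r}$ given one at a time: the learner must guess $f(x_{i,j})$ before receiving $x_{i,j+1}$; after all $r$ guesses the adversary says YES if all $r$ guesses were correct and NO otherwise. A mistake is a round with answer NO. $\mathrm{opt}_{\mathrm{amb},r}(F)$ is the maximum number of mistakes under optimal play by both learner and adversary (answers consistent with some $f\in F$). *)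

(* Defs.v *)
From Stdlib Require Import Reals Arith.
Set Implicit Arguments.

(* Standard model.  [std_forces G k]: starting with version space G
   (the functions of F consistent with all information revealed so far),
   the adversary has a strategy forcing at least k mistakes against every
   learner.  A trial: the adversary chooses x; for every guess y of the
   learner the adversary reveals a value v consistent with some function
   of G; a mistake occurs when v <> y.  The inductive (least fixed point)
   reading means the k mistakes are forced in finitely many trials. *)
Inductive std_forces {X : Type} : ((X -> bool) -> Prop) -> nat -> Prop :=
| std_zero G : std_forces G 0
| std_step G k (x : X) :
    (forall y : bool, exists v : bool,
        (exists f, G f /\ f x = v) /\
        std_forces (fun f => G f /\ f x = v) (if Bool.eqb v y then k else pred k)) ->
    std_forces G k.

(* r-delayed ambiguous reinforcement model.
   [amb_win r j P G k]: we are inside a round in which j inputs remain to be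
   presented; P f holds iff all guesses made so far in this round agree with
   f on the corresponding inputs; G is the version space at the start of the
   round.  The adversary can force k more mistakes (rounds answered NO). *)
Inductive amb_win {X : Type} (r : nat) :
  nat -> ((X -> bool) -> Prop) -> ((X -> bool) -> Prop) -> nat -> Prop :=
| amb_zero j P G : amb_win r j P G 0
| amb_input j P G k (x : X) :
    (forall y : bool, amb_win r j (fun f => P f /\ f x = y) G k) ->
    amb_win r (S j) P G k
| amb_yes P G k :
    (exists f, G f /\ P f) ->
    amb_win r r (fun _ => True) (fun f => G f /\ P f) k ->
    amb_win r 0 P G k
| amb_no P G k :
    (exists f, G f /\ ~ P f) ->
    amb_win r r (fun _ => True) (fun f => G f /\ ~ P f) k ->
    amb_win r 0 P G (S k).

Definition amb_forces {X : Type} (r : nat) (F : (X -> bool) -> Prop) (k : nat) : Prop :=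
  amb_win r r (fun _ => True) F k.

Definition opt_std_le {X : Type} (F : (X -> bool) -> Prop) (d : nat) : Prop :=
  forall m, std_forces F m -> (m <= d)%nat.

(* Main.v *)
Require Import Defs.
From Stdlib Require Import Reals Arith.
From Stdlib Require Import Lia List Classical ClassicalDescription Lra.
Open Scope R_scope.

Section Comb.
Context {X : Type}.
Definition cls := (X -> bool) -> Prop.

Lemma sf_mono : forall (G : cls) m, std_forces G m -> forall m', (m' <= m)%nat -> std_forces G m'.
Proof.
  fix IH 3. intros G m H m' Hle. destruct H as [G|G k x Hs].
  - assert (m' = 0%nat) by lia. subst. constructor.
  - apply (@std_step X G m' x). intros y. destruct (Hs y) as [v [Hw Hc]].
    exists v. split; [exact Hw|]. apply (IH _ _ Hc).
    destruct (Bool.eqb v y); lia.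
Qed.

Lemma sf_sub : forall (G : cls) m, std_forces G m -> forall H : cls, (forall f, G f -> H f) -> std_forces H m.
Proof.
  fix IH 3. intros G m Hf H Hsub. destruct Hf as [G|G k x Hs].
  - constructor.
  - apply (@std_step X H k x). intros y. destruct (Hs y) as [v [[f [Gf fx]] Hc]].
    exists v. split; [exists f; auto|]. apply (IH _ _ Hc).
    intros g [Gg gx]. auto.
Qed.

Definition Ok (A : cls) (e : nat) : Prop :=
  forall m, std_forces A m -> (exists f, A f) -> (m < e)%nat.

Lemma Ok_sub : forall A B e, Ok A e -> (forall f, B f -> A f) -> Ok B e.
Proof.
  intros A B e H Hs m Hm [f Bf]. apply H; [|exists f; auto].
  apply (sf_sub _ _ Hm). exact Hs.
Qed.

Lemma Ok_pos : forall A e f, Ok A e -> A f -> (0 < e)%nat.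
Proof. intros A e f H Af. apply (H 0%nat); [constructor | exists f; auto]. Qed.

Lemma Ok_split : forall (A : cls) e (x : X), Ok A e ->
  exists s : bool, Ok (fun f => A f /\ f x = negb s) (pred e).
Proof.
  intros A e x H. destruct e as [|e].
  - exists true. intros m _ [f [Af _]]. pose proof (Ok_pos _ _ _ H Af). lia.
  - apply NNPP. intro Hn.
    assert (Hb : forall s, ~ Ok (fun f => A f /\ f x = negb s) e).
    { intros s Hs. apply Hn. exists s. exact Hs. }
    assert (Hf : forall s, std_forces (fun f => A f /\ f x = negb s) e /\ exists f, A f /\ f x = negb s).
    { intros s. specialize (Hb s). unfold Ok in Hb.
      apply not_all_ex_not in Hb. destruct Hb as [m Hm].
      apply imply_to_and in Hm. destruct Hm as [Hm Hm2].
      apply imply_to_and in Hm2. destruct Hm2 as [Hne Hlt].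
      split; [apply (sf_mono _ _ Hm); lia | destruct Hne as [f Hf]; exists f; exact Hf]. }
    assert (std_forces A (S e)).
    { apply (@std_step X A (S e) x). intros y. exists (negb y).
      destruct (Hf y) as [Hs [f Hf']]. split; [exists f; exact Hf'|].
      destruct y; simpl; exact Hs. }
    destruct (Hf true) as [_ [f [Af _]]].
    specialize (H _ H0 (ex_intro _ f Af)). lia.
Qed.

Definition soa (A : cls) (e : nat) (x : X) : bool :=
  if excluded_middle_informative (Ok (fun f => A f /\ f x = false) (pred e)) then true else false.

Lemma soa_spec : forall A e x, Ok A e -> Ok (fun f => A f /\ f x = negb (soa A e x)) (pred e).
Proof.
  intros A e x H. unfold soa.
  destruct (excluded_middle_informative _) as [h|h]; [exact h|].
  destruct (Ok_split A e x H) as [[|] Hs]; [contradiction|exact Hs].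
Qed.

End Comb.

Section Game.
Local Open Scope bool_scope.
Context {X : Type}.
Variables (r : nat) (lam : R).
Hypothesis Hlam1 : 1 <= lam.
Hypothesis Hlamr : INR r <= lam.
Definition cc := (1 - INR r / lam) * (/2)^r.

Definition w (e : nat) : R := match e with O => 0 | S n => lam ^ n end.

Lemma w_nonneg e : 0 <= w e.
Proof. destruct e; simpl; [lra|]. apply pow_le. lra. Qed.

Lemma w_pred e : lam * w (pred e) <= w e.
Proof. destruct e as [|[|n]]; simpl; lra. Qed.

Lemma w_pred_le e : w (pred e) <= w e.
Proof. pose proof (w_pred e). pose proof (w_nonneg (pred e)). nra. Qed.

Record PS := mkPS { pA : @cls X; pe : nat; pm : bool; pC : @cls X; pch : list (@cls X) }.

Definition sumR (g : PS -> R) (l : list PS) : R := fold_right (fun p acc => g p + acc) 0 l.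

Lemma sumR_map g h l : sumR g (map h l) = sumR (fun p => g (h p)) l.
Proof. induction l; simpl; [reflexivity|rewrite IHl; reflexivity]. Qed.

Lemma sumR_le g h l : (forall p, In p l -> g p <= h p) -> sumR g l <= sumR h l.
Proof.
  induction l; simpl; intros H; [lra|].
  pose proof (H a (or_introl eq_refl)). assert (sumR g l <= sumR h l) by (apply IHl; auto). lra.
Qed.

Lemma sumR_ext g h l : (forall p, In p l -> g p = h p) -> sumR g l = sumR h l.
Proof.
  intros H. apply Rle_antisym; apply sumR_le; intros p Hp; rewrite (H p Hp); lra.
Qed.

Lemma sumR_plus g h l : sumR (fun p => g p + h p) l = sumR g l + sumR h l.
Proof. induction l; simpl; [lra|rewrite IHl; lra]. Qed.

Lemma sumR_app g l1 l2 : sumR g (l1 ++ l2) = sumR g l1 + sumR g l2.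
Proof. induction l1; simpl; [lra|rewrite IHl1; lra]. Qed.

Lemma sumR_flat_map g h l : sumR g (flat_map h l) = sumR (fun p => sumR g (h p)) l.
Proof. induction l; simpl; [reflexivity|rewrite sumR_app, IHl; reflexivity]. Qed.

Lemma sumR_nonneg g l : (forall p, 0 <= g p) -> 0 <= sumR g l.
Proof. intros H; induction l; simpl; [lra|]. pose proof (H a). lra. Qed.

Lemma sumR_In g l p : (forall q, 0 <= g q) -> In p l -> g p <= sumR g l.
Proof.
  intros H; induction l; simpl; intros Hin; [contradiction|].
  destruct Hin as [<-|Hin].
  - pose proof (sumR_nonneg g l H). lra.
  - pose proof (IHl Hin). pose proof (H a). lra.
Qed.

Definition Phi l := sumR (fun p => w (pe p)) l.
Definition Wm l := sumR (fun p => if pm p then w (pe p) else 0) l.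

Lemma sum_fr (cs : list (@cls X)) e : sumR (fun p => w (pe p)) (map (fun c => mkPS c e true c nil) cs) = INR (length cs) * w e.
Proof.
  induction cs as [|c cs IHc]; [simpl; lra|]. change (length (c :: cs)) with (S (length cs)).
  rewrite S_INR. unfold sumR in *. cbn [map fold_right]. rewrite IHc. cbn [pe]. ring.
Qed.

Definition Inv (j : nat) (P G : @cls X) (l : list PS) : Prop :=
  (j <= r)%nat /\
  (forall f, G f -> exists p, In p l /\ pA p f) /\
  (forall p, In p l -> Ok (pA p) (pe p) /\
     (if pm p then
        (length (pch p) = (r - j)%nat /\ (forall c, In c (pch p) -> Ok c (pred (pe p))) /\
         (forall f, pA p f -> ~ P f -> exists c, In c (pch p) /\ c f))
      else (Ok (pC p) (pred (pe p)) /\ forall f, pA p f -> P f -> pC p f))) /\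
  (/2)^(r - j) * Phi l <= Wm l.

Lemma Phi_ge1 l (G : @cls X) f : (forall f, G f -> exists p, In p l /\ pA p f) ->
  (forall p, In p l -> Ok (pA p) (pe p)) -> G f -> 1 <= Phi l.
Proof.
  intros Hc Hok Gf. destruct (Hc f Gf) as [p [Hin Af]].
  pose proof (Ok_pos _ _ _ (Hok p Hin) Af).
  assert (1 <= w (pe p)).
  { destruct (pe p) as [|n]; [lia|]. simpl. clear -Hlam1. induction n; simpl; [lra|nra]. }
  pose proof (sumR_In (fun p => w (pe p)) l p (fun q => w_nonneg _) Hin). unfold Phi. simpl in *. lra.
Qed.

Lemma powle1 x n : 0 <= x <= 1 -> x ^ n <= 1.
Proof. intros H; induction n; simpl; [lra|]. pose proof (pow_le x n (proj1 H)). nra. Qed.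

Lemma cc_le1 : 0 <= 1 - cc.
Proof.
  unfold cc. assert (0 < lam) by lra.
  assert (0 <= INR r / lam <= 1). { split. apply Rmult_le_pos; [apply pos_INR|left; apply Rinv_0_lt_compat; lra].
    apply (Rmult_le_reg_r lam); [lra|]. unfold Rdiv. rewrite Rmult_assoc, Rinv_l; lra. }
  assert (0 <= (/2)^r <= 1). { split. apply pow_le; lra. apply powle1; lra. }
  nra.
Qed.

Lemma main_game : forall j P G k, amb_win r j P G k -> forall l, Inv j P G l ->
  k = 0%nat \/ 1 <= (1 - cc)^k * Phi l.
Proof.
  intros j P G k H. induction H as [j P G|j P G k x Hy IH|P G k Hex H IH|P G k Hex H IH]; intros l Hinv.
  - left; reflexivity.
  -
    destruct Hinv as [Hjr [Hcov [Hp Hw]]].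
    set (s := fun p => soa (fun f => pA p f /\ P f) (pe p) x).
    assert (Hy0 : exists y, /2 * Wm l <= sumR (fun p => if pm p && Bool.eqb (s p) y then w (pe p) else 0) l).
    { assert (E : Wm l = sumR (fun p => if pm p && Bool.eqb (s p) true then w (pe p) else 0) l
                       + sumR (fun p => if pm p && Bool.eqb (s p) false then w (pe p) else 0) l).
      { unfold Wm. rewrite <- sumR_plus. apply sumR_ext. intros p _.
        destruct (pm p), (s p); simpl; lra. }
      destruct (Rle_dec (sumR (fun p => if pm p && Bool.eqb (s p) false then w (pe p) else 0) l)
                        (sumR (fun p => if pm p && Bool.eqb (s p) true then w (pe p) else 0) l)).
      - exists true. lra.
      - exists false. lra. }
    destruct Hy0 as [y Hy0].
    set (upd := fun p => if pm p then
        (if Bool.eqb (s p) y then mkPS (pA p) (pe p) true (pC p) ((fun f => (pA p f /\ P f) /\ f x = negb y) :: pch p)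
         else mkPS (pA p) (pe p) false (fun f => (pA p f /\ P f) /\ f x = negb (s p)) (pch p))
        else p).
    set (l' := map upd l).
    assert (HA : forall p, pA (upd p) = pA p).
    { intros p. unfold upd. destruct (pm p); [destruct (Bool.eqb (s p) y)|]; reflexivity. }
    assert (He : forall p, pe (upd p) = pe p).
    { intros p. unfold upd. destruct (pm p); [destruct (Bool.eqb (s p) y)|]; reflexivity. }
    assert (Hinv' : Inv j (fun f => P f /\ f x = y) G l').
    { split; [lia|]. split; [|split].
      - intros f Gf. destruct (Hcov f Gf) as [p [Hin Af]].
        exists (upd p). split; [apply (in_map upd); exact Hin|]. rewrite HA; exact Af.
      - intros q Hq. apply in_map_iff in Hq. destruct Hq as [p [<- Hin]].
        destruct (Hp p Hin) as [Hok Hq]. rewrite HA, He. split; [exact Hok|].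
        assert (HokP : Ok (fun f => pA p f /\ P f) (pe p)).
        { apply (Ok_sub _ _ _ Hok). intros f [Af _]; exact Af. }
        pose proof (soa_spec _ _ x HokP) as Hsoa. fold (s p) in Hsoa.
        unfold upd. destruct (pm p) eqn:Em.
        + destruct Hq as [Hlen [Hch Hcv]]. destruct (Bool.eqb (s p) y) eqn:Ey.
          * apply Bool.eqb_prop in Ey. rewrite <- Ey. cbn [pm pch pe pA].
            split; [simpl; lia|]. split.
            -- intros c [<-|Hc]; [exact Hsoa|apply Hch; exact Hc].
            -- intros f Af Hn. destruct (classic (P f)) as [Pf|Pf].
               ++ exists (fun f => (pA p f /\ P f) /\ f x = negb (s p)). split; [left; reflexivity|].
                  split; [split; assumption|]. destruct (f x), (s p); simpl; auto; exfalso; apply Hn; auto.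
               ++ destruct (Hcv f Af Pf) as [c [Hc1 Hc2]]. exists c. split; [right; exact Hc1|exact Hc2].
          * cbn [pm pC pe pA]. split; [exact Hsoa|].
            intros f Af [Pf fx]. split; [split; assumption|]. rewrite fx.
            destruct (s p), y; simpl in *; congruence.
        + rewrite Em. destruct Hq as [HC Hcv]. split; [exact HC|]. intros f Af [Pf _]. apply Hcv; assumption.
      - assert (Ep : Phi l' = Phi l).
        { unfold Phi, l'. rewrite sumR_map. apply sumR_ext. intros p _. rewrite He. reflexivity. }
        assert (Ew : Wm l' = sumR (fun p => if pm p && Bool.eqb (s p) y then w (pe p) else 0) l).
        { unfold Wm, l'. rewrite sumR_map. apply sumR_ext. intros p _. unfold upd.
          destruct (pm p) eqn:Em; [destruct (Bool.eqb (s p) y)|]; simpl; try rewrite Em; reflexivity. }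
        rewrite Ep, Ew. replace (r - j)%nat with (S (r - S j)) by lia. simpl.
        pose proof (Phi_ge1). lra. }
    destruct (IH y l' Hinv') as [Hk|Hk]; [left; exact Hk|right].
    assert (Ep : Phi l' = Phi l).
    { unfold Phi, l'. rewrite sumR_map. apply sumR_ext. intros p _. rewrite He. reflexivity. }
    rewrite <- Ep. exact Hk.
  -
    destruct Hinv as [Hjr [Hcov [Hp Hw]]].
    set (fy := fun p => if pm p then mkPS (pA p) (pe p) true (pA p) nil
                             else mkPS (pC p) (pred (pe p)) true (pC p) nil).
    set (l' := map fy l).
    assert (Hinv' : Inv r (fun _ => True) (fun f => G f /\ P f) l').
    { split; [lia|]. split; [|split].
      - intros f [Gf Pf]. destruct (Hcov f Gf) as [p [Hin Af]].
        exists (fy p).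
        split; [apply (in_map fy); exact Hin|]. unfold fy.
        destruct (Hp p Hin) as [_ Hq]. destruct (pm p); simpl; [exact Af|].
        apply (proj2 Hq); auto.
      - intros q Hq. apply in_map_iff in Hq. destruct Hq as [p [<- Hin]].
        destruct (Hp p Hin) as [Hok Hq]. unfold fy. destruct (pm p); simpl.
        + split; [exact Hok|]. split; [lia|]. split; [intros c []|]. intros f _ Hn; exfalso; auto.
        + split; [exact (proj1 Hq)|]. split; [lia|]. split; [intros c []|]. intros f _ Hn; exfalso; auto.
      - replace (r - r)%nat with 0%nat by lia. simpl. rewrite Rmult_1_l.
        unfold Phi, Wm, l'. rewrite !sumR_map. right. apply sumR_ext. intros p _.
        unfold fy; destruct (pm p); reflexivity. }
    destruct (IH l' Hinv') as [Hk|Hk]; [left; exact Hk|right].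
    assert (Phi l' <= Phi l).
    { unfold Phi, l'. rewrite sumR_map. apply sumR_le. intros p _. unfold fy; destruct (pm p); simpl; [lra|apply w_pred_le]. }
    pose proof (pow_le _ k cc_le1). nra.
  -
    destruct Hinv as [Hjr [Hcov [Hp Hw]]].
    set (fr := fun (A : @cls X) e => mkPS A e true A nil).
    set (fn := fun p => if pm p then map (fun c => fr c (pred (pe p))) (pch p) else fr (pA p) (pe p) :: nil).
    set (l' := flat_map fn l).
    assert (Hinv' : Inv r (fun _ => True) (fun f => G f /\ ~ P f) l').
    { split; [lia|]. split; [|split].
      - intros f [Gf Pf]. destruct (Hcov f Gf) as [p [Hin Af]].
        destruct (Hp p Hin) as [_ Hq]. unfold l'.
        destruct (pm p) eqn:E.
        + destruct Hq as [_ [_ Hc]]. destruct (Hc f Af Pf) as [c [Hc1 Hc2]].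
          exists (fr c (pred (pe p))). split; [|exact Hc2].
          apply in_flat_map. exists p. split; [exact Hin|]. unfold fn. rewrite E.
          apply (in_map (fun c => fr c (pred (pe p)))). exact Hc1.
        + exists (fr (pA p) (pe p)). split; [|exact Af].
          apply in_flat_map. exists p. split; [exact Hin|]. unfold fn. rewrite E. left; reflexivity.
      - intros q Hq. apply in_flat_map in Hq. destruct Hq as [p [Hin Hq]].
        destruct (Hp p Hin) as [Hok Hpp]. unfold fn in Hq. destruct (pm p).
        + apply in_map_iff in Hq. destruct Hq as [c [<- Hc]]. simpl.
          split; [apply (proj1 (proj2 Hpp)); exact Hc|].
          split; [lia|]. split; [intros c' []|]. intros f _ Hn; exfalso; auto.
        + destruct Hq as [<-|[]]. simpl. split; [exact Hok|].
          split; [lia|]. split; [intros c' []|]. intros f _ Hn; exfalso; auto.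
      - replace (r - r)%nat with 0%nat by lia. simpl. rewrite Rmult_1_l.
        unfold Phi, Wm, l'. rewrite !sumR_flat_map. right. apply sumR_ext. intros p _.
        unfold fn; destruct (pm p); [|reflexivity]. induction (pch p) as [|c cs IHc]; simpl; [reflexivity|rewrite IHc; reflexivity]. }
    assert (Hge1 : 1 <= Phi l').
    { destruct Hex as [f Hf]. destruct Hinv' as [_ [Hc' [Hp' _]]].
      apply (Phi_ge1 l' (fun f => G f /\ ~ P f) f Hc'); [|exact Hf].
      intros p Hin; exact (proj1 (Hp' p Hin)). }
    assert (Hdec : Phi l' <= Phi l - (1 - INR r / lam) * Wm l).
    { unfold Phi, Wm, l'. rewrite sumR_flat_map.
      assert (E : sumR (fun p => w (pe p)) l - (1 - INR r / lam) * sumR (fun p => if pm p then w (pe p) else 0) l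
        = sumR (fun p => w (pe p) - (1 - INR r / lam) * (if pm p then w (pe p) else 0)) l).
      { clear. induction l; simpl; [lra|]. rewrite <- IHl. lra. }
      rewrite E. apply sumR_le. intros p Hin. unfold fn.
      destruct (Hp p Hin) as [_ Hq]. destruct (pm p).
      + replace (sumR (fun p0 : PS => w (pe p0)) (map (fun c : cls => fr c (Init.Nat.pred (pe p))) (pch p)))
          with (INR (length (pch p)) * w (pred (pe p))).
        2:{ unfold fr. rewrite sum_fr. reflexivity. }
        destruct Hq as [Hlen _]. rewrite Hlen. replace (r - 0)%nat with r by lia.
        pose proof (w_pred (pe p)). pose proof (w_nonneg (pred (pe p))).
        assert (0 < lam) by lra.
        assert (INR r / lam * w (pe p) >= INR r * w (pred (pe p))).
        { unfold Rdiv. apply Rle_ge. apply (Rmult_le_reg_l lam); [lra|].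
          replace (lam * (INR r * / lam * w (pe p))) with (INR r * w (pe p)) by (field; lra).
          pose proof (pos_INR r). nra. }
        lra.
      + simpl. lra. }
    replace (r - 0)%nat with r in Hw by lia.
    assert (Hphi : Phi l' <= (1 - cc) * Phi l).
    { unfold cc. assert (0 <= 1 - INR r / lam).
      { assert (0 < lam) by lra. assert (INR r / lam <= 1).
        { apply (Rmult_le_reg_r lam); [lra|]. unfold Rdiv. rewrite Rmult_assoc, Rinv_l; lra. } lra. }
      nra. }
    right. destruct (IH l' Hinv') as [Hk|Hk].
    + subst k. simpl. lra.
    + simpl. pose proof (pow_le _ k cc_le1). pose proof cc_le1. nra.
Qed.

End Game.

Definition eps (n : nat) : R := 2 / sqrt (ln (INR n)) + / ln (INR n).

Lemma ln_le_sub1 x : 0 < x -> ln x <= x - 1.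
Proof.
  intros Hx. destruct (Rle_dec (ln x) (x - 1)) as [h|h]; [exact h|].
  exfalso. apply Rnot_le_lt in h. pose proof (exp_ineq1_le (x - 1)).
  apply exp_increasing in h. rewrite exp_ln in h by exact Hx. lra.
Qed.

Lemma bound_real (r d k : nat) : (2 <= r)%nat ->
  let L := ln (INR r) in let s := sqrt L in let lam := INR r * (1 + s) in
  (k = 0%nat \/ 1 <= (1 - cc r lam) ^ k * lam ^ d) ->
  INR k <= INR d * 2 ^ r * ln (INR r) * (1 + eps r).
Proof.
  intros Hr L s lam H.
  assert (HrR : 2 <= INR r) by (apply (le_INR 2 r) in Hr; simpl in Hr; lra).
  assert (HL : 0 < L). { unfold L. rewrite <- ln_1. apply ln_increasing; lra. }
  assert (Hs : 0 < s) by (apply sqrt_lt_R0; exact HL).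
  assert (Hss : s * s = L) by (apply sqrt_sqrt; lra).
  assert (HT : 0 < 2 ^ r) by (apply pow_lt; lra).
  assert (Hd : 0 <= INR d) by apply pos_INR.
  assert (Heps : 1 + eps r = (1 + s) * (1 + s) / L).
  { unfold eps. fold L. fold s. field_simplify; [|lra|lra]. rewrite <- Hss. field. lra. }
  assert (Hgoal : INR d * 2 ^ r * L * (1 + eps r) = INR d * 2 ^ r * ((1 + s) * (1 + s))).
  { rewrite Heps. field. lra. }
  fold L. rewrite Hgoal.
  destruct H as [Hk|Hk].
  - subst k. simpl. pose proof (Rmult_le_pos _ _ (Rmult_le_pos _ _ Hd (Rlt_le _ _ HT)) (Rmult_le_pos (1+s) (1+s) ltac:(lra) ltac:(lra))). lra.
  - assert (Hlam : 0 < lam) by (unfold lam; nra).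
    assert (Hcc : cc r lam = s / (1 + s) / 2 ^ r).
    { unfold cc, lam. rewrite pow_inv. field. split; [lra|]. split; [lra|]. lra. }
    assert (Hc0 : 0 < s / (1 + s) / 2 ^ r).
    { apply Rdiv_lt_0_compat; [apply Rdiv_lt_0_compat; lra|exact HT]. }
    assert (Hc1 : s / (1 + s) / 2 ^ r < 1).
    { apply (Rmult_lt_reg_r (2 ^ r)); [exact HT|]. unfold Rdiv. rewrite Rmult_assoc, Rinv_l by lra.
      assert (s / (1 + s) < 1). { apply (Rmult_lt_reg_r (1 + s)); [lra|]. unfold Rdiv. rewrite Rmult_assoc, Rinv_l by lra. lra. }
      assert (1 <= 2 ^ r) by (apply pow_R1_Rle; lra). unfold Rdiv in H. lra. }
    rewrite Hcc in Hk. set (c := s / (1 + s) / 2 ^ r) in *.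
    assert (H1c : 0 < 1 - c) by lra.
    assert (Hln : 0 <= INR k * ln (1 - c) + INR d * ln lam).
    { rewrite <- !ln_pow by lra. rewrite <- ln_mult by (apply pow_lt; lra).
      rewrite <- ln_1. destruct (Rle_lt_or_eq_dec _ _ Hk) as [h|h].
      - left. apply ln_increasing; lra.
      - right. f_equal. exact h. }
    assert (Hl1 : ln (1 - c) <= - c) by (pose proof (ln_le_sub1 (1 - c) H1c); lra).
    assert (Hl2 : ln lam <= L + s).
    { unfold lam. rewrite ln_mult by lra. fold L. pose proof (ln_le_sub1 (1 + s)). lra. }
    assert (Hk0 : 0 <= INR k) by apply pos_INR.
    assert (Hkc : INR k * c <= INR d * (L + s)) by nra.
    unfold c in Hkc. rewrite <- Hss in Hkc.
    assert (E : INR k * (s / (1 + s) / 2 ^ r) * ((1 + s) * 2 ^ r / s) = INR k) by (field; lra).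
    assert (E2 : INR d * (s * s + s) * ((1 + s) * 2 ^ r / s) = INR d * 2 ^ r * ((1 + s) * (1 + s))) by (field; lra).
    assert (Hpos : 0 < (1 + s) * 2 ^ r / s) by (apply Rdiv_lt_0_compat; nra).
    rewrite <- E, <- E2. apply Rmult_le_compat_r; lra.
Qed.

Lemma eps_cv : Un_cv eps 0.
Proof.
  intros e He. set (M := 16 / (e * e) + 2 / e + 1).
  destruct (INR_archimed 1 (exp M) ltac:(lra)) as [N HN]. rewrite Rmult_1_r in HN.
  exists N. intros n Hn. unfold R_dist. rewrite Rminus_0_r.
  assert (HnN : INR N <= INR n) by (apply le_INR; lia).
  pose proof (exp_pos M).
  assert (HL : M < ln (INR n)).
  { rewrite <- (ln_exp M). apply ln_increasing; lra. }
  set (L := ln (INR n)) in *.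
  assert (He2 : 0 < 16 / (e * e)) by (apply Rdiv_lt_0_compat; nra).
  assert (He3 : 0 < 2 / e) by (apply Rdiv_lt_0_compat; lra).
  assert (HL0 : 0 < L) by (unfold M in HL; lra).
  assert (Hs : 4 / e < sqrt L).
  { rewrite <- (sqrt_square (4 / e)) by (left; apply Rdiv_lt_0_compat; lra).
    apply sqrt_lt_1; [nra|lra|]. replace (4 / e * (4 / e)) with (16 / (e * e)) by (field; lra).
    unfold M in HL; lra. }
  assert (H4 : 0 < 4 / e) by (apply Rdiv_lt_0_compat; lra).
  assert (Ha : 2 / sqrt L < e / 2).
  { apply (Rmult_lt_reg_r (sqrt L)); [lra|]. unfold Rdiv. rewrite Rmult_assoc, Rinv_l by lra.
    replace 2 with (e / 2 * (4 / e)) at 1 by (field; lra). unfold Rdiv. nra. }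
  assert (Hb : / L < e / 2).
  { apply (Rmult_lt_reg_r L); [lra|]. rewrite Rinv_l by lra.
    assert (2 / e < L) by (unfold M in HL; lra).
    replace 1 with (e / 2 * (2 / e)) by (field; lra). unfold Rdiv in *. nra. }
  unfold eps. fold L.
  assert (0 < 2 / sqrt L) by (apply Rdiv_lt_0_compat; lra).
  assert (0 < / L) by (apply Rinv_0_lt_compat; lra).
  rewrite Rabs_right by lra. lra.
Qed.

Theorem mainTheorem9 :
  exists eps : nat -> R,
    Un_cv eps 0 /\
    forall (r : nat), (2 <= r)%nat ->
    forall (X : Type) (F : (X -> bool) -> Prop) (d k : nat),
      opt_std_le F d ->
      amb_forces r F k ->
      INR k <= INR d * 2 ^ r * ln (INR r) * (1 + eps r).
Proof.
  exists eps. split; [exact eps_cv|].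
  intros r Hr X F d k Hopt Hamb.
  apply (bound_real r d k Hr). cbv zeta.
  set (lam := INR r * (1 + sqrt (ln (INR r)))).
  assert (HrR : 2 <= INR r) by (apply (le_INR 2 r) in Hr; simpl in Hr; lra).
  assert (Hs : 0 <= sqrt (ln (INR r))) by apply sqrt_pos.
  assert (Hl1 : 1 <= lam) by (unfold lam; nra).
  assert (Hl2 : INR r <= lam) by (unfold lam; nra).
  set (l0 := @mkPS X F (S d) true F nil :: nil).
  assert (Hinv : Inv r lam r (fun _ => True) F l0).
  { split; [lia|]. split; [|split].
    - intros f Ff. exists (@mkPS X F (S d) true F nil). split; [left; reflexivity|exact Ff].
    - intros p [<-|[]]. simpl. split.
      + intros m Hm _. specialize (Hopt m Hm). lia.
      + split; [lia|]. split; [intros c []|]. intros f _ Hn; exfalso; auto.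
    - replace (r - r)%nat with 0%nat by lia. unfold Phi, Wm. simpl. lra. }
  destruct (main_game r lam Hl1 Hl2 r _ _ k Hamb l0 Hinv) as [Hk|Hk]; [left; exact Hk|right].
  unfold Phi in Hk. simpl in Hk. rewrite Rplus_0_r in Hk. exact Hk.
Qed.
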